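(* For all integers $n$ and $\alpha$ with $n\le\alpha\le 2^n$, there exists a minimal $n$-state nondeterministic finite automaton accepting a star language whose equivalent minimal deterministic finite automaton has exactly $\alpha$ states. The same statement holds with ''star language'' replaced by ''comet language'', and also with ''star language'' replaced by ''two-sided comet language''.
   Context: NFAs have a single initial state and a transition function $\delta:Q\times\Sigma\to 2^Q$ that may map to the empty set (no sink state is needed or counted); DFAs are complete, so a sink state is counted. A minimal $n$-state NFA is an NFA with $n$ states such that no NFA with fewer states accepts the same language. A language $L\subseteq\Sigma^*$ is a star language if $L=H^*$ for some regular language $H\subseteq\Sigma^*$. It is a comet language if $L=G^*H$ for regular languages $G,H\subseteq\Sigma^*$ with $G\neq\{\lambda\}$ and $G\neq\emptyset$ ($\lambda$ the empty word). It is a two-sided comet language if $L=EG^*H$ for regular languages $E,G,H\subseteq\Sigma^*$ with $G\neq\{\lambda\}$ and $G\neq\emptyset$. *)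

(* Defs.v *)
From mathcomp Require Import all_boot.
Set Implicit Arguments. Unset Strict Implicit. Unset Printing Implicit Defensive.

Section Automata.
Variable Sigma : finType.

Definition lang := seq Sigma -> Prop.

Definition lang_eq (L1 L2 : lang) : Prop := forall w, L1 w <-> L2 w.

Definition lconcat (L1 L2 : lang) : lang :=
  fun w => exists u v, w = u ++ v /\ L1 u /\ L2 v.

Definition lstar (L : lang) : lang :=
  fun w => exists ws : seq (seq Sigma), (forall u, u \in ws -> L u) /\ w = flatten ws.

(* NFA with states 'I_n, a single initial state, delta : Q x Sigma -> 2^Q
   (possibly empty; no sink state). *)
Record nfa (n : nat) := NFA {
  n_init : 'I_n;
  n_trans : 'I_n -> Sigma -> {set 'I_n};
  n_final : {set 'I_n} }.

Definition nfa_run n (A : nfa n) (S : {set 'I_n}) (w : seq Sigma) : {set 'I_n} :=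
  foldl (fun (S : {set 'I_n}) (a : Sigma) => \bigcup_(q in S) n_trans A q a) S w.

Definition nfa_lang n (A : nfa n) : lang :=
  fun w => nfa_run A [set n_init A] w :&: n_final A != set0.

(* Complete DFA with states 'I_m (a sink state, if any, is counted). *)
Record dfa (m : nat) := DFA {
  d_init : 'I_m;
  d_trans : 'I_m -> Sigma -> 'I_m;
  d_final : {set 'I_m} }.

Definition dfa_lang m (D : dfa m) : lang :=
  fun w => foldl (d_trans D) (d_init D) w \in d_final D.

Definition regular (L : lang) : Prop :=
  exists m (A : nfa m), lang_eq (nfa_lang A) L.

Definition minimal_nfa n (A : nfa n) : Prop :=
  forall k (B : nfa k), k < n -> ~ lang_eq (nfa_lang B) (nfa_lang A).

Definition min_dfa_size (L : lang) (alpha : nat) : Prop :=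
  (exists D : dfa alpha, lang_eq (dfa_lang D) L) /\
  (forall k (D : dfa k), k < alpha -> ~ lang_eq (dfa_lang D) L).

Definition lang_eps : lang := fun w => w = [::].
Definition lang_empty : lang := fun _ => False.

Definition star_language (L : lang) : Prop :=
  exists H : lang, regular H /\ lang_eq L (lstar H).

Definition comet_language (L : lang) : Prop :=
  exists G H : lang, regular G /\ regular H /\
    ~ lang_eq G lang_eps /\ ~ lang_eq G lang_empty /\
    lang_eq L (lconcat (lstar G) H).

Definition two_sided_comet_language (L : lang) : Prop :=
  exists E G H : lang, regular E /\ regular G /\ regular H /\
    ~ lang_eq G lang_eps /\ ~ lang_eq G lang_empty /\
    lang_eq L (lconcat E (lconcat (lstar G) H)).

End Automata.

(* Main.v *)
Require Import Defs.
From mathcomp Require Import all_boot.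
From mathcomp Require Import zify.
Set Implicit Arguments. Unset Strict Implicit. Unset Printing Implicit Defensive.

Definition step (Sigma : finType) n (A : nfa Sigma n) (S : {set 'I_n}) (a : Sigma) :=
  \bigcup_(q in S) n_trans A q a.

Definition acc (Sigma : finType) n (A : nfa Sigma n) (S : {set 'I_n}) w : bool :=
  nfa_run A S w :&: n_final A != set0.

Lemma run_cons (Sigma : finType) n (A : nfa Sigma n) (S : {set 'I_n}) a w :
  nfa_run A S (a :: w) = nfa_run A (step A S a) w.
Proof. by []. Qed.

Lemma run_nil (Sigma : finType) n (A : nfa Sigma n) (S : {set 'I_n}) : nfa_run A S [::] = S.
Proof. by []. Qed.

Lemma run_cat (Sigma : finType) n (A : nfa Sigma n) (S : {set 'I_n}) u v :
  nfa_run A S (u ++ v) = nfa_run A (nfa_run A S u) v.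
Proof. by rewrite /nfa_run foldl_cat. Qed.

Lemma step_mono (Sigma : finType) n (A : nfa Sigma n) (S T : {set 'I_n}) a :
  S \subset T -> step A S a \subset step A T a.
Proof.
move=> /subsetP ST; apply/subsetP => x /bigcupP [q qS xq].
by apply/bigcupP; exists q => //; apply: ST.
Qed.

Lemma run_mono (Sigma : finType) n (A : nfa Sigma n) w : forall S T : {set 'I_n},
  S \subset T -> nfa_run A S w \subset nfa_run A T w.
Proof.
elim: w => [|a w IH] S T ST //.
rewrite !run_cons; apply: IH; exact: step_mono.
Qed.

Lemma acc_mono (Sigma : finType) n (A : nfa Sigma n) (S T : {set 'I_n}) w :
  S \subset T -> acc A S w -> acc A T w.
Proof.
move=> ST; rewrite /acc => /set0Pn [x /setIP [x1 x2]].
apply/set0Pn; exists x; apply/setIP; split => //.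
by move: x1; apply/subsetP; apply: run_mono.
Qed.

Lemma run_split (Sigma : finType) n (A : nfa Sigma n) w : forall (S : {set 'I_n}) p,
  p \in nfa_run A S w -> exists2 q, q \in S & p \in nfa_run A [set q] w.
Proof.
elim: w => [|a w IH] S p.
  by move=> pS; exists p => //; rewrite in_set1.
rewrite run_cons => /IH [r /bigcupP [q qS rq] pr].
exists q => //; rewrite run_cons.
move: pr; apply/subsetP; apply: run_mono.
rewrite sub1set; apply/bigcupP; exists q => //; by rewrite in_set1.
Qed.

Lemma acc_split (Sigma : finType) n (A : nfa Sigma n) (S : {set 'I_n}) u v :
  acc A S (u ++ v) -> exists2 q, q \in nfa_run A S u & acc A [set q] v.
Proof.
rewrite /acc run_cat => /set0Pn [p /setIP [p1 p2]].
have [q q1 q2] := run_split p1.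
exists q => //; apply/set0Pn; exists p; exact/setIP.
Qed.

Lemma acc_cat (Sigma : finType) n (A : nfa Sigma n) (S : {set 'I_n}) u v :
  acc A S (u ++ v) = acc A (nfa_run A S u) v.
Proof. by rewrite /acc run_cat. Qed.

Lemma fooling (Sigma : finType) n (A : nfa Sigma n) (x y : 'I_n -> seq Sigma) :
  (forall i, nfa_lang A (x i ++ y i)) ->
  (forall i j, nfa_lang A (x i ++ y j) -> nfa_lang A (x j ++ y i) -> i = j) ->
  minimal_nfa A.
Proof.
move=> Hd Hf k B kn HB.
have HB' : forall w, acc B [set n_init B] w -> nfa_lang A w by move=> w /HB.
have HB'' : forall w, nfa_lang A w -> acc B [set n_init B] w by move=> w /HB.
pose f (i : 'I_n) := odflt (n_init B)
   [pick q | (q \in nfa_run B [set n_init B] (x i)) && acc B [set q] (y i)].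
have fP : forall i, (f i \in nfa_run B [set n_init B] (x i)) && acc B [set f i] (y i).
  move=> i; rewrite /f; case: pickP => [q -> //|H] /=.
  have [q q1 q2] := acc_split (HB'' _ (Hd i)).
  by move: (H q); rewrite q1 q2.
have finj : injective f.
  move=> i j fij; apply: Hf; apply: HB'; rewrite acc_cat.
  - move: (fP i) (fP j) => /andP [i1 i2] /andP [j1 j2].
    apply: acc_mono j2; by rewrite sub1set -fij.
  - move: (fP i) (fP j) => /andP [i1 i2] /andP [j1 j2].
    apply: acc_mono i2; by rewrite sub1set fij.
have := @leq_card _ _ f finj; rewrite !card_ord; lia.
Qed.

Lemma dfa_lower (Sigma : finType) (L : lang Sigma) alpha (w : 'I_alpha -> seq Sigma) :
 (forall i j, i != j -> exists z, ~ (L (w i ++ z) <-> L (w j ++ z))) ->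
 forall k (D : dfa Sigma k), k < alpha -> ~ lang_eq (dfa_lang D) L.
Proof.
move=> Hw k D ka HD.
pose f (i : 'I_alpha) := foldl (d_trans D) (d_init D) (w i).
have : ~~ injectiveb f.
  apply/negP => /injectiveP finj.
  have := @leq_card _ _ f finj; rewrite !card_ord; lia.
move/injectivePn => [i [j ij fij]].
have [z Hz] := Hw i j ij; apply: Hz.
rewrite -!HD /dfa_lang !foldl_cat.
by rewrite -/(f i) -/(f j) fij.
Qed.

Lemma min_dfa_R (Sigma : finType) n (A : nfa Sigma n) (R : {set {set 'I_n}})
  (reach : {set 'I_n} -> seq Sigma) (HR0 : [set n_init A] \in R) :
  (forall S, S \in R -> nfa_run A [set n_init A] (reach S) = S) ->
  (forall S a, S \in R -> step A S a \in R) ->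
  (forall S T, S \in R -> T \in R -> S != T -> exists w, acc A S w != acc A T w) ->
  min_dfa_size (nfa_lang A) #|R|.
Proof.
move=> Hreach Hcl Hdist; split.
  pose D := @DFA Sigma #|R| (enum_rank_in HR0 [set n_init A])
     (fun i a => enum_rank_in HR0 (step A (enum_val i) a))
     [set i | enum_val i :&: n_final A != set0].
  exists D.
  have inv : forall w (i : 'I_#|R|), enum_val (foldl (d_trans D) i w) = nfa_run A (enum_val i) w.
    elim => [|a w IH] i //.
    rewrite /= IH -/(step A _ a) enum_rankK_in //; exact/Hcl/enum_valP.
  move=> w; rewrite /dfa_lang /nfa_lang.
  rewrite in_set inv /= enum_rankK_in //.
apply: (dfa_lower (w := fun i => reach (enum_val i))).
move=> i j ij.
have vij : enum_val i != enum_val j.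
  by apply: contra ij => /eqP /enum_val_inj ->.
have [z Hz] := Hdist _ _ (enum_valP i) (enum_valP j) vij.
exists z; rewrite /nfa_lang -/(acc A _ _) -/(acc A _ _) !acc_cat !Hreach ?enum_valP //.
by move=> H; apply: (negP Hz); apply/eqP; apply/idP/idP => /H.
Qed.

Section S.
Variables (Sigma : finType) (n : nat) (A : nfa Sigma n).
Hypothesis Hfin : n_final A = [set n_init A].

Let L := nfa_lang A.

Lemma L_nil : L [::].
Proof. by rewrite /L /nfa_lang /= Hfin setIid; apply/set0Pn; exists (n_init A); rewrite in_set1. Qed.

Lemma L_cat u v : L u -> L v -> L (u ++ v).
Proof.
rewrite /L /nfa_lang -!/(acc A _ _) acc_cat => Hu Hv.
apply: acc_mono Hv; rewrite sub1set.
move: Hu; rewrite /acc Hfin => /set0Pn [p /setIP [p1]]; rewrite in_set1 => /eqP pe; by rewrite pe in p1.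
Qed.

Lemma L_star w : lstar L w <-> L w.
Proof.
split.
  move=> [ws [Hws ->]]; elim: ws Hws => [|u ws IH] Hws /=; first exact: L_nil.
  apply: L_cat; first by apply: Hws; rewrite inE eqxx.
  by apply: IH => v vws; apply: Hws; rewrite inE vws orbT.
move=> Hw; exists [:: w]; split; last by rewrite /= cats0.
by move=> u; rewrite inE => /eqP ->.
Qed.

Lemma L_regular : regular L.
Proof. by exists n, A. Qed.

Lemma L_comet (Hne : exists w, w != [::] /\ L w) :
  star_language L /\ comet_language L /\ two_sided_comet_language L.
Proof.
have Geps : ~ lang_eq L (@lang_eps Sigma).
  move: Hne => [w [wn Lw]] H; move/H: Lw; rewrite /lang_eps => /eqP; exact/negP.
have Gemp : ~ lang_eq L (@lang_empty Sigma) by move=> H; move/H: L_nil.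
have LL : forall w, lconcat (lstar L) L w <-> L w.
  move=> w; split.
    by move=> [u [v [-> [/L_star Hu Hv]]]]; apply: L_cat.
  by move=> Hw; exists [::], w; split => //; split => //; apply/L_star/L_nil.
split; first by exists L; split; [exact: L_regular| move=> w; rewrite L_star].
split.
  exists L, L; do 4 (split => //; try exact: L_regular).
  by move=> w; rewrite LL.
exists L, L, L; do 5 (split => //; try exact: L_regular).
move=> w; split.
  by move=> Hw; exists [::], w; split => //; split; [exact: L_nil | apply/LL].
by move=> [u [v [-> [Hu /LL Hv]]]]; apply: L_cat.
Qed.
End S.

Lemma exist_mid (T : finType) d : forall (A B : {set T}),
  A \subset B -> #|A| + d <= #|B| -> exists C : {set T}, [/\ A \subset C, C \subset B & #|C| = #|A| + d].
Proof.
elim: d => [|d IH] A B AB Hc.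
  by exists A; rewrite addn0.
have : A \proper B by rewrite properEcard AB /=; lia.
move/properP => [_ [x xB xA]].
have := IH (x |: A) B; rewrite cardsU1 xA /= => /(_ _ _).
case.
- by rewrite subUset sub1set xB AB.
- lia.
move=> C [h1 h2 h3]; exists C; split => //; last lia.
by apply: subset_trans h1; apply: subsetUr.
Qed.

Lemma bigcup_const (T I : finType) (S : {set I}) (C : {set T}) :
  \bigcup_(q in S) C = if S == set0 then set0 else C.
Proof.
case: eqP => [->|/eqP /set0Pn [q qS]]; first by rewrite big_set0.
apply/setP => x; apply/bigcupP/idP => [[_ _ //]|xC]; by exists q.
Qed.

Section C1.
Variables (m : nat) (F : {set {set 'I_m.+1}}).
Hypothesis Fsing : forall i, [set i] \in F.
Hypothesis F0 : set0 \notin F.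

Definition Sig1 := ({set 'I_m.+1} + 'I_m.+1)%type.

Definition tr1 (q : 'I_m.+1) (a : Sig1) : {set 'I_m.+1} :=
  match a with
  | inl T => if T \in F then T else set0
  | inr p => if q == p then [set ord0] else set0
  end.

Definition A1 : nfa Sig1 m.+1 := NFA ord0 tr1 [set ord0].

Lemma step_inl S T : step A1 S (inl T) = if (S != set0) && (T \in F) then T else set0.
Proof.
rewrite /step /= bigcup_const; case: (S == set0) => //=.
Qed.

Lemma step_inr S p : step A1 S (inr p) = if p \in S then [set ord0] else set0.
Proof.
apply/setP => x; apply/bigcupP/idP.
  by move=> [q qS]; rewrite /=; case: eqP => [<-|_]; rewrite ?qS // inE.
case: ifP => pS; last by rewrite inE.
by move=> xo; exists p => //=; rewrite eqxx.
Qed.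

Lemma acc_inr S p : acc A1 S [:: inr p] = (p \in S).
Proof.
rewrite /acc run_cons run_nil step_inr /=; case: (p \in S).
  by rewrite setIid; apply/set0Pn; exists ord0; rewrite inE.
by rewrite set0I eqxx.
Qed.

Lemma C1_main : exists (Sigma : finType) (A : nfa Sigma m.+1),
  [/\ minimal_nfa A, n_final A = [set n_init A],
      min_dfa_size (nfa_lang A) #|set0 |: F| &
      exists w, w != [::] /\ nfa_lang A w].
Proof.
exists Sig1, A1; split => //.
- apply: (fooling (x := fun i => [:: inl [set i]]) (y := fun i => [:: inr i])).
    move=> i; rewrite /nfa_lang -/(acc A1 _ _) acc_cat run_cons run_nil step_inl Fsing.
    have -> : ([set n_init A1] != set0) by apply/set0Pn; exists ord0; rewrite inE.
    by rewrite acc_inr inE.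
  move=> i j; rewrite /nfa_lang -!/(acc A1 _ _) !acc_cat !run_cons !run_nil !step_inl !Fsing.
  have -> : ([set n_init A1] != set0) by apply/set0Pn; exists ord0; rewrite inE.
  by rewrite /= !acc_inr inE => /eqP.
- apply: (@min_dfa_R _ _ A1 _ (fun S => [:: inl S])).
  + by rewrite !inE Fsing orbT.
  + move=> S SR; rewrite run_cons run_nil step_inl.
    have -> : ([set n_init A1] != set0) by apply/set0Pn; exists ord0; rewrite inE.
    move: SR; rewrite !inE => /orP [/eqP ->|->] //=.
    by rewrite (negbTE F0).
  + move=> S [T|p] SR; rewrite ?step_inl ?step_inr.
      case: ifP => [/andP [_ TF]|_]; by rewrite !inE ?TF ?orbT ?eqxx.
    by case: ifP => _; rewrite !inE ?Fsing ?orbT ?eqxx.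
  + move=> S T _ _ ST.
    have : ~~ [forall q, (q \in S) == (q \in T)].
      apply: contra ST => /forallP H; apply/eqP/setP => q; exact/eqP/H.
    rewrite negb_forall => /existsP [q Hq].
    by exists [:: inr q]; rewrite !acc_inr.
- exists [:: inl [set ord0]]; split => //.
  rewrite /nfa_lang -/(acc A1 _ _) /acc run_cons run_nil step_inl Fsing /=.
  have -> : ([set ord0] != set0 :> {set 'I_m.+1}) by apply/set0Pn; exists ord0; rewrite inE.
  by rewrite setIid; apply/set0Pn; exists ord0; rewrite inE.
Qed.
End C1.

Lemma key_mod n (i j : nat) : i < n -> j < n -> ((i + (n - j)) %% n == 0) = (i == j).
Proof.
move=> ilt jlt.
case: (ltngtP i j) => H.
- rewrite modn_small; lia.
- have -> : i + (n - j) = (i - j) + n by lia.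
  rewrite modnDr modn_small; lia.
- by rewrite H subnKC ?modnn ?eqxx // ltnW.
Qed.

Section C2.
Variable m : nat.
Let n := m.+1.

Definition A2 : nfa unit n := NFA ord0 (fun q _ => [set ordS q]) [set ord0].

Lemma iter_ordS k (q : 'I_n) : val (iter k (@ordS n) q) = (q + k) %% n.
Proof.
elim: k => [|k IH] /=; first by rewrite addn0 modn_small.
rewrite IH -addn1 modnDml; congr (_ %% _); lia.
Qed.

Lemma run2 k : forall q : 'I_n, nfa_run A2 [set q] (nseq k tt) = [set iter k (@ordS n) q].
Proof.
elim: k => [|k IH] q //.
change (nseq k.+1 tt) with (tt :: nseq k tt); rewrite run_cons /step big_set1 IH; congr [set _]; by rewrite -iterSr.
Qed.

Lemma acc2 k (q : 'I_n) : acc A2 [set q] (nseq k tt) = ((q + k) %% n == 0).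
Proof.
rewrite /acc run2 /= -iter_ordS.
apply/set0Pn/eqP => [[x /setIP [] ]|H].
  by rewrite !inE => /eqP -> /eqP ->.
exists ord0; rewrite !inE; apply/andP; split => //; apply/eqP/val_inj => //.
Qed.

Lemma pick1 (i : 'I_n) : [pick x in [set i]] = Some i.
Proof.
case: pickP => [x|]; rewrite ?inE; first by move/eqP ->.
by move/(_ i); rewrite inE eqxx.
Qed.

Lemma C2_main : exists (Sigma : finType) (A : nfa Sigma n),
  [/\ minimal_nfa A, n_final A = [set n_init A],
      min_dfa_size (nfa_lang A) n &
      exists w, w != [::] /\ nfa_lang A w].
Proof.
exists unit, A2; split => //.
- apply: (fooling (x := fun i : 'I_n => nseq i tt) (y := fun i : 'I_n => nseq (n - i) tt)).
    move=> i; rewrite /nfa_lang -/(acc A2 _ _) -nseqD acc2 /= add0n.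
    by rewrite key_mod.
  move=> i j; rewrite /nfa_lang -!/(acc A2 _ _) -!nseqD !acc2 /= !add0n.
  by rewrite key_mod // => /eqP /val_inj.
- have E : #|[set [set i] | i : 'I_n]| = n by rewrite card_imset ?card_ord //; exact: set1_inj.
  rewrite -[X in min_dfa_size _ X]E.
  apply: (@min_dfa_R _ _ A2 _ (fun S => nseq (odflt ord0 [pick x in S]) tt)).
  + by apply/imsetP; exists ord0.
  + move=> S /imsetP [i _ ->]; rewrite pick1 /= run2.
    congr [set _]; apply/val_inj; by rewrite iter_ordS /= add0n modn_small.
  + move=> S [] /imsetP [i _ ->]; rewrite /step big_set1.
    by apply/imsetP; exists (ordS i).
  + move=> S T /imsetP [i _ ->] /imsetP [j _ ->] ij.
    exists (nseq (n - i) tt); rewrite !acc2 !key_mod // eqxx.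
    case: (eqVneq j i) => [E2|->//]; by rewrite E2 eqxx in ij.
- exists (nseq n tt); split => //.
  rewrite /nfa_lang -/(acc A2 _ _) acc2 /= add0n modnn //.
Qed.
End C2.

Lemma core_construction n alpha : 1 <= n -> n <= alpha <= 2 ^ n ->
  exists (Sigma : finType) (A : nfa Sigma n),
  [/\ minimal_nfa A, n_final A = [set n_init A],
      min_dfa_size (nfa_lang A) alpha &
      exists w, w != [::] /\ nfa_lang A w].
Proof.
case: n => [//|m] _ /andP [H1 H2].
case: (eqVneq alpha m.+1) => [->|ne]; first exact: C2_main.
pose Sg := [set [set i] | i : 'I_m.+1].
have cSg : #|Sg| = m.+1 by rewrite card_imset ?card_ord //; exact: set1_inj.
have cN : #|[set~ (set0 : {set 'I_m.+1})]| = 2 ^ m.+1 - 1.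
  rewrite cardsC1 -cardsT -powersetT card_powerset cardsT card_ord; lia.
have sub : Sg \subset [set~ set0].
  apply/subsetP => S /imsetP [i _ ->]; rewrite !inE; apply/set0Pn; exists i; by rewrite inE.
have [F [h1 h2 h3]] := exist_mid (d := alpha - 1 - m.+1) sub (ltac:(rewrite cSg cN; lia)).
have Fs : forall i, [set i] \in F by move=> i; apply: (subsetP h1); apply/imsetP; exists i.
have F0 : set0 \notin F by apply/negP => /(subsetP h2); rewrite !inE eqxx.
have [Sigma [A [a1 a2 a3 a4]]] := C1_main Fs F0.
exists Sigma, A; split => //.
have -> : alpha = #|set0 |: F| by rewrite cardsU1 F0 h3 cSg; lia.
exact: a3.
Qed.

Theorem mainTheorem3 : forall n alpha : nat, 1 <= n -> n <= alpha <= 2 ^ n ->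
  (exists (Sigma : finType) (A : nfa Sigma n),
      minimal_nfa A /\ star_language (nfa_lang A) /\ min_dfa_size (nfa_lang A) alpha) /\
  (exists (Sigma : finType) (A : nfa Sigma n),
      minimal_nfa A /\ comet_language (nfa_lang A) /\ min_dfa_size (nfa_lang A) alpha) /\
  (exists (Sigma : finType) (A : nfa Sigma n),
      minimal_nfa A /\ two_sided_comet_language (nfa_lang A) /\
      min_dfa_size (nfa_lang A) alpha).
Proof.
move=> n alpha H1 H2.
have [Sigma [A [a1 a2 a3 a4]]] := core_construction H1 H2.
have [b1 [b2 b3]] := L_comet a2 a4.
split; [|split]; exists Sigma, A; by split.
Qed.
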